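(* Assume $s_1=\cdots=s_m=s$ and let $\delta\in\{1,\dots,s^m\}$. Let $v\in\{0,\dots,m-1\}$ be such that $s^v\le\delta\le s^{v+1}$. If $\delta^\perp$ is a positive integer with $\delta^\perp\le\left\lfloor\left(s-\frac{\delta}{s^v}+1\right)s^{m-v-1}\right\rfloor$, then $$\{N\in\Delta(s,\dots,s)\mid D^\perp(N)<\delta^\perp\}\subseteq\{N\in\Delta(s,\dots,s)\mid D(N)\ge\delta\}.$$
   Context: $\Delta(s,\dots,s)=\{X_1^{i_1}\cdots X_m^{i_m}\mid 0\le i_t<s,\ t=1,\dots,m\}$. For $N=X_1^{i_1}\cdots X_m^{i_m}$: $D(N)=\prod_{t=1}^m(s-i_t)$ and $D^\perp(N)=\prod_{t=1}^m(i_t+1)$. *)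

(* Defs.v *)
From HB Require Import structures.
From mathcomp Require Import all_boot all_order all_algebra.
Set Implicit Arguments. Unset Strict Implicit. Unset Printing Implicit Defensive.
Import Order.TTheory GRing.Theory Num.Theory.

(* A monomial X_1^{i_1} ... X_m^{i_m} of Delta(s,...,s) is represented by its
   exponent vector (i_t)_{t<m} with 0 <= i_t < s. *)
Definition Delta (m s : nat) := {ffun 'I_m -> 'I_s}.

Definition D (m s : nat) (N : Delta m s) : nat := (\prod_(t < m) (s - N t))%N.

Definition Dperp (m s : nat) (N : Delta m s) : nat := (\prod_(t < m) (N t).+1)%N.

(* Main.v *)
Require Import Defs.
From HB Require Import structures.
From mathcomp Require Import all_boot all_order all_algebra.
From mathcomp Require Import zify ring lra.
Import Order.TTheory GRing.Theory Num.Theory.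

Lemma step1 (a b P Q y z U V : nat) : b*Q <= a*P -> a*U + b*(y.+1+z)*V <= a*P + b*(y.+1+z)*Q ->
  a*U + b*((y.+1+z)*V) <= a*(y.+1*P) + b*(z.+1*Q).
Proof.
move=> h1 h2.
have e1 : a*(y.+1*P) = a*P + y*(a*P) by rewrite mulnA (mulnC a) -mulnA mulSn.
have e2 : b*(z.+1*Q) = b*Q + z*(b*Q) by rewrite mulnA (mulnC b) -mulnA mulSn.
have e3 : b*(y.+1+z)*Q = b*Q + y*(b*Q) + z*(b*Q) by rewrite mulnDr mulnS; lia.
have e4 : b*((y.+1+z)*V) = b*(y.+1+z)*V by rewrite mulnA.
have : y*(b*Q) <= y*(a*P) by apply: leq_mul.
lia.
Qed.
Lemma step2 (a b P Q y z U V : nat) : a*P < b*Q -> a*(y.+1+z)*U + b*V <= a*(y.+1+z)*P + b*Q ->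
  a*((y.+1+z)*U) + b*V <= a*(y.+1*P) + b*(z.+1*Q).
Proof.
move=> h1 h2.
have e1 : a*(y.+1*P) = a*P + y*(a*P) by rewrite mulnA (mulnC a) -mulnA mulSn.
have e2 : b*(z.+1*Q) = b*Q + z*(b*Q) by rewrite mulnA (mulnC b) -mulnA mulSn.
have e3 : a*(y.+1+z)*P = a*P + y*(a*P) + z*(a*P) by rewrite mulnDr mulnS; lia.
have e4 : a*((y.+1+z)*U) = a*(y.+1+z)*U by rewrite mulnA.
have : z*(a*P) <= z*(b*Q) by apply: leq_mul => //; apply: ltnW.
lia.
Qed.

Lemma seq_bound (s : nat) (l : seq nat) :
  all (fun x => (0 < x <= s)%N) l ->
  forall a b : nat, exists2 j, (j <= size l)%N &
   (a * s ^ j + b * s ^ (size l - j) <=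
    a * \prod_(x <- l) x + b * \prod_(x <- l) (s.+1 - x))%N.
Proof.
elim: l => [|x l IH] /=.
  move=> _ a b; exists 0%N => //; by rewrite !big_nil.
move=> /andP [/andP [x0 xs] Hl] a b.
rewrite !big_cons.
case: x x0 xs => [//|y] _ xs.
have [z ez] : exists z, s = y.+1 + z by exists (s - y.+1); lia.
subst s.
have -> : (y.+1 + z).+1 - y.+1 = z.+1 by lia.
have [le|lt] := leqP (b * \prod_(x <- l) ((y.+1 + z).+1 - x)) (a * \prod_(x <- l) x).
  have [j jl Hj] := IH Hl a (b * (y.+1 + z)).
  exists j; first by apply: leq_trans jl _.
  have -> : (size l).+1 - j = (size l - j).+1 by rewrite subSn.
  rewrite expnS; exact: step1.
have [j jl Hj] := IH Hl (a * (y.+1 + z)) b.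
exists j.+1; first by [].
rewrite subSS expnS; exact: step2.
Qed.

Lemma pow_ineq (s m p q : nat) : (0 < s)%N -> (p + q = m + m.-1)%N -> (0 < m)%N ->
  (s ^ m + s ^ m.-1 <= s ^ p + s ^ q)%N.
Proof.
move=> s0 e m0.
wlog pq : p q e / (q <= p)%N.
  move=> W; have [h|h] := leqP q p; first exact: W.
  rewrite (addnC (s ^ p)); apply: W; lia.
have [d ed] : exists d, p = m + d by exists (p - m); lia.
have eq : q = m.-1 - d by lia.
have dm : (d <= m.-1)%N by lia.
rewrite ed eq.
have [c ec] : exists c, m.-1 = d + c by exists (m.-1 - d); lia.
have -> : m = (d + c).+1 by lia.
rewrite /=.
have -> : d + c - d = c by lia.
rewrite !expnD !expnS.
have X1 : (0 < s ^ d)%N by rewrite expn_gt0 s0.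
have X2 : (0 < s ^ c)%N by rewrite expn_gt0 s0.
set X := s ^ d in X1 *; set Y := s ^ c in X2 *.
have sX : 0 < s * X by rewrite muln_gt0 s0 X1.
have Hk : (s * X + X <= s * X * X + 1)%N by nia.
have := leq_mul (leqnn Y) Hk.
rewrite expnD -/X -/Y; nia.
Qed.

Lemma key (m s v : nat) (N : Delta m s) : (v < m)%N ->
  ((s + 1) * s ^ m.-1 <= s ^ v * Dperp N + s ^ (m - v - 1) * D N)%N.
Proof.
move=> vm.
have s0 : (0 < s)%N.
  case: s N => // N; have := N (Ordinal vm); by case.
set l := [seq (N t).+1 | t <- enum 'I_m].
have Hl : all (fun x => (0 < x <= s)%N) l.
  by apply/allP => x /mapP [t _ ->]; rewrite /= ltn_ord.
have [j jl Hj] := @seq_bound s l Hl (s ^ v) (s ^ (m - v - 1)).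
have e1 : Dperp N = \prod_(x <- l) x.
  by rewrite /Dperp /l big_map big_enum.
have e2 : D N = \prod_(x <- l) (s.+1 - x).
  by rewrite /D /l big_map big_enum; apply: eq_bigr => t _; rewrite subSS.
rewrite e1 e2; apply: leq_trans Hj.
rewrite -!expnD.
have sl : size l = m by rewrite /l size_map size_enum_ord.
rewrite sl in jl *.
have -> : (s + 1) * s ^ m.-1 = s ^ m + s ^ m.-1.
  have -> : m = m.-1.+1 by lia.
  rewrite /= expnS; lia.
apply: pow_ineq => //; lia.
Qed.

Theorem mainTheorem3 (m s delta v deltap : nat) :
  (1 <= delta <= s ^ m)%N ->
  (v < m)%N ->
  (s ^ v <= delta <= s ^ v.+1)%N ->
  (0 < deltap)%N ->
  (deltap%:Z <=
     Num.floor (((s%:R - delta%:R / (s ^ v)%:R + 1) * (s ^ (m - v - 1))%:R) : rat))%R ->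
  [set N : Delta m s | (Dperp N < deltap)%N] \subset [set N : Delta m s | (delta <= D N)%N].
Proof.
move=> _ vm _ _ Hf.
apply/subsetP => N; rewrite !inE => HN.
have s0 : (0 < s)%N.
  case: s N Hf HN => // N; have := N (Ordinal vm); by case.
have K := @key m s v N vm.
set q := ((s%:R - delta%:R / (s ^ v)%:R + 1) * (s ^ (m - v - 1))%:R : rat) in Hf.
have H1 : ((Dperp N).+1%:R <= q :> rat)%R.
  apply: le_trans (floor_le q).
  apply: le_trans (_ : (deltap%:Z)%:~R <= _)%R; last by rewrite ler_int.
  by rewrite -pmulrn ler_nat.
have sv0 : ((s ^ v)%:R != 0 :> rat)%R by rewrite pnatr_eq0 -lt0n expn_gt0 s0.
have Eq : (q * (s ^ v)%:R = ((s + 1) * s ^ m.-1)%:R - (delta * s ^ (m - v - 1))%:R)%R.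
  have -> : ((s + 1) * s ^ m.-1 = (s + 1) * s ^ v * s ^ (m - v - 1))%N.
    by rewrite -mulnA -expnD; congr (_ * s ^ _); lia.
  rewrite /q !natrM natrD; field.
  done.
have H2 : ((Dperp N).+1%:R * (s ^ v)%:R <= q * (s ^ v)%:R :> rat)%R.
  by rewrite ler_pM2r // lt0r sv0 ler0n.
rewrite Eq lerBrDr -!natrM -natrD ler_nat in H2.
have P : (0 < s ^ v)%N by rewrite expn_gt0 s0.
have P2 : (0 < s ^ (m - v - 1))%N by rewrite expn_gt0 s0.
move: K H2.
set A := Dperp N; set B := D N; set X := s ^ v; set Y := s ^ (m - v - 1).
set Z := (s + 1) * s ^ m.-1.
move=> K H2.
have : (delta * Y < B * Y)%N by nia.
rewrite ltn_pmul2r //; exact: ltnW.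
Qed.
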